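(* Let $R$ be a Noetherian ring, $q\in R^\times$ a central unit, and $(\sigma,\delta)$ a $q$-skew derivation on $R$. Let $N$ be a $\sigma$-ideal of $R$, and suppose there is a positive integer $n$ such that $\delta^n(N^n)=0$ and $\{n!\}_q$ is invertible in $R$. Then $\delta(N)^n\subseteq N$. In particular, if $N$ is the prime radical of $R$, then $\delta(N)\subseteq N$.
   Context: A skew derivation is a pair $(\sigma,\delta)$ with $\sigma$ a ring automorphism and $\delta$ additive with $\delta(ab)=\delta(a)b+\sigma(a)\delta(b)$. It is a $q$-skew derivation if $\delta\sigma=q\sigma\delta$, $\sigma(q)=q$ and $\delta(q)=0$. A $\sigma$-ideal is a two-sided ideal $I$ with $\sigma(I)\subseteq I$. $\{n!\}_q:=(1)(1+q)(1+q+q^2)\cdots(1+q+\cdots+q^{n-1})\in R$. $\delta(N)^n$ denotes the set of all products $\delta(s_1)\cdots\delta(s_n)$ with $s_i\in N$ (and their sums). The prime radical of $R$ is the intersection of all prime ideals of $R$. *)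

(* Defs.v *)
From HB Require Import structures.
From mathcomp Require Import all_boot all_order all_algebra.
Set Implicit Arguments. Unset Strict Implicit. Unset Printing Implicit Defensive.
Import GRing.Theory.
Local Open Scope ring_scope.

Section Defs.
Variable R : unitRingType.

Definition subsetR (A B : R -> Prop) := forall x, A x -> B x.

Definition is_left_ideal (I : R -> Prop) :=
  [/\ I 0, (forall x y, I x -> I y -> I (x + y)) & (forall r x, I x -> I (r * x))].
Definition is_right_ideal (I : R -> Prop) :=
  [/\ I 0, (forall x y, I x -> I y -> I (x + y)) & (forall r x, I x -> I (x * r))].
Definition is_ideal (I : R -> Prop) := is_left_ideal I /\ is_right_ideal I.

Definition left_noetherian :=
  forall I : nat -> R -> Prop, (forall k, is_left_ideal (I k)) ->
    (forall k, subsetR (I k) (I k.+1)) ->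
    exists m, forall k, (m <= k)%N -> forall x, I k x <-> I m x.
Definition right_noetherian :=
  forall I : nat -> R -> Prop, (forall k, is_right_ideal (I k)) ->
    (forall k, subsetR (I k) (I k.+1)) ->
    exists m, forall k, (m <= k)%N -> forall x, I k x <-> I m x.
Definition noetherian := left_noetherian /\ right_noetherian.

Definition is_prime_ideal (P : R -> Prop) :=
  [/\ is_ideal P, ~ P 1 &
    forall A B : R -> Prop, is_ideal A -> is_ideal B ->
      (forall a b, A a -> B b -> P (a * b)) -> subsetR A P \/ subsetR B P].

Definition prime_radical (x : R) := forall P, is_prime_ideal P -> P x.

Definition setpow (S : R -> Prop) (n : nat) (x : R) :=
  exists m (f : 'I_m -> 'I_n -> R),
    (forall j i, S (f j i)) /\ x = \sum_(j < m) \prod_(i < n) f j i.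

Definition imageR (f : R -> R) (S : R -> Prop) (y : R) := exists s, S s /\ y = f s.

Definition is_ring_automorphism (s : R -> R) :=
  [/\ (forall x y, s (x + y) = s x + s y), (forall x y, s (x * y) = s x * s y),
      s 1 = 1 & bijective s].

Definition is_skew_derivation (s d : R -> R) :=
  [/\ is_ring_automorphism s, (forall x y, d (x + y) = d x + d y) &
      (forall a b, d (a * b) = d a * b + s a * d b)].

Definition is_q_skew_derivation (q : R) (s d : R -> R) :=
  [/\ is_skew_derivation s d, (forall x, d (s x) = q * s (d x)), s q = q & d q = 0].

Definition is_sigma_ideal (s : R -> R) (N : R -> Prop) :=
  is_ideal N /\ forall x, N x -> N (s x).

Definition qfact (q : R) (n : nat) : R := \prod_(i < n) \sum_(j < i.+1) q ^+ j.

Definition central (q : R) := forall x, q * x = x * q.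

End Defs.

(* Main.v *)
Require Import Defs.
From HB Require Import structures.
From mathcomp Require Import all_boot all_order all_algebra zify.
Import GRing.Theory.
Local Open Scope ring_scope.

Section Main.
Variable R : unitRingType.
Variables (q : R) (s d : R -> R) (N : R -> Prop).
Hypothesis Hqsd : is_q_skew_derivation q s d.
Hypothesis HN : is_sigma_ideal s N.

Lemma sD x y : s (x + y) = s x + s y. Proof. by case: Hqsd => [[[]]]. Qed.
Lemma sM x y : s (x * y) = s x * s y. Proof. by case: Hqsd => [[[]]]. Qed.
Lemma s1 : s 1 = 1. Proof. by case: Hqsd => [[[]]]. Qed.
Lemma sbij : bijective s. Proof. by case: Hqsd => [[[]]]. Qed.
Lemma dD x y : d (x + y) = d x + d y. Proof. by case: Hqsd => [[]]. Qed.
Lemma dM x y : d (x * y) = d x * y + s x * d y. Proof. by case: Hqsd => [[]]. Qed.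
Lemma ds x : d (s x) = q * s (d x). Proof. by case: Hqsd. Qed.
Lemma sq : s q = q. Proof. by case: Hqsd. Qed.
Lemma dq : d q = 0. Proof. by case: Hqsd. Qed.
Lemma s0 : s 0 = 0.
Proof. have h := sD 0 0; rewrite addr0 in h. by apply: (addrI (s 0)); rewrite addr0 -h. Qed.
Lemma d0 : d 0 = 0.
Proof. have h := dD 0 0; rewrite addr0 in h. by apply: (addrI (d 0)); rewrite addr0 -h. Qed.
Lemma d1 : d 1 = 0.
Proof. have h := dM 1 1; rewrite mul1r mulr1 s1 mul1r in h. by apply: (addrI (d 1)); rewrite addr0 -h. Qed.

Lemma N0 : N 0. Proof. by case: HN => [[[]]]. Qed.
Lemma NDr x y : N x -> N y -> N (x + y). Proof. by case: HN => [[[]]] _ H _ _ _; apply: H. Qed.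
Lemma NMl r x : N x -> N (r * x). Proof. by case: HN => [[[]]] _ _ H _ _; apply: H. Qed.
Lemma NMr r x : N x -> N (x * r). Proof. by case: HN => [[_ [] _ _ H]] _; apply: H. Qed.
Lemma Ns x : N x -> N (s x). Proof. by case: HN => _; apply. Qed.
Lemma NN x : N x -> N (- x). Proof. by move=> Hx; rewrite -mulN1r; apply: NMl. Qed.
Lemma NB x y : N x -> N y -> N (x - y). Proof. by move=> Hx Hy; apply: NDr => //; apply: NN. Qed.

Definition good (c : R) := [/\ d c = 0, s c = c & central c].
Lemma good1 : good 1. Proof. split; [exact: d1 | exact: s1 | by move=> x; rewrite mul1r mulr1]. Qed.
Lemma good0 : good 0. Proof. split; [exact: d0 | exact: s0 | by move=> x; rewrite mul0r mulr0]. Qed.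
Hypothesis Hq : central q.
Lemma goodD a b : good a -> good b -> good (a + b).
Proof.
move=> [a1 a2 a3] [b1 b2 b3]; split; first by rewrite dD a1 b1 addr0.
  by rewrite sD a2 b2.
by move=> x; rewrite mulrDl mulrDr a3 b3.
Qed.
Lemma goodM a b : good a -> good b -> good (a * b).
Proof.
move=> [a1 a2 a3] [b1 b2 b3]; split; first by rewrite dM a1 b1 mul0r mulr0 addr0.
  by rewrite sM a2 b2.
by move=> x; rewrite -mulrA b3 mulrA a3 mulrA.
Qed.
Lemma goodq : good q. Proof. by split; [exact: dq | exact: sq | exact: Hq]. Qed.
Lemma goodX j : good (q ^+ j).
Proof. elim: j => [|j IH]; first exact: good1. by rewrite exprS; apply: goodM => //; apply: goodq. Qed.
Lemma good_sum m (F : 'I_m -> R) : (forall i, good (F i)) -> good (\sum_(i < m) F i).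
Proof. move=> H; apply: (big_ind good) => //; [exact: good0 | exact: goodD]. Qed.
Lemma good_prod m (F : 'I_m -> R) : (forall i, good (F i)) -> good (\prod_(i < m) F i).
Proof. move=> H; apply: (big_ind good) => //; [exact: good1 | exact: goodM]. Qed.
Lemma d_good c z : good c -> d (c * z) = c * d z.
Proof. by case=> c1 c2 _; rewrite dM c1 mul0r add0r c2. Qed.
Lemma s_good c z : good c -> s (c * z) = c * s z.
Proof. by case=> _ c2 _; rewrite sM c2. Qed.
Lemma dsum I (r : seq I) (P : pred I) (F : I -> R) :
  d (\sum_(i <- r | P i) F i) = \sum_(i <- r | P i) d (F i).
Proof. exact: (big_morph d dD d0). Qed.

Notation D k x := (iter k d x).
Notation S k x := (iter k s x).
Lemma SD k x y : S k (x + y) = S k x + S k y.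
Proof. by elim: k => [|k IH] //=; rewrite IH sD. Qed.
Lemma SM k x y : S k (x * y) = S k x * S k y.
Proof. by elim: k => [|k IH] //=; rewrite IH sM. Qed.
Lemma S0 k : S k 0 = 0.
Proof. by elim: k => [|k IH] //=; rewrite IH s0. Qed.
Lemma NS k x : N x -> N (S k x).
Proof. by move=> Hx; elim: k => [|k IH] //=; apply: Ns. Qed.
Lemma dS j z : d (S j z) = q ^+ j * S j (d z).
Proof.
elim: j => [|j IH]; first by rewrite expr0 mul1r.
by rewrite !iterS ds IH (s_good _ _ (goodX j)) exprS mulrA.
Qed.

Fixpoint cc (k j : nat) : R :=
  match k with
  | 0 => if j is 0 then 1 else 0
  | k'.+1 => q ^+ j * cc k' j + (if j is j'.+1 then cc k' j' else 0)
  end.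
Lemma good_cc k j : good (cc k j).
Proof.
elim: k j => [|k IH] [|j] /=; try exact: good1; try exact: good0.
  by rewrite addr0; apply: goodM; [apply: goodX | apply: IH].
by apply: goodD; [apply: goodM; [apply: goodX | apply: IH] | apply: IH].
Qed.
Lemma cc_big k j : (k < j)%N -> cc k j = 0.
Proof.
elim: k j => [|k IH] [|j] //= Hj.
by rewrite IH ?(ltn_trans _ Hj) // IH // mulr0 addr0.
Qed.
Lemma cc_diag k : cc k k = 1.
Proof. elim: k => [|k IH] //=; by rewrite cc_big // mulr0 add0r. Qed.
Lemma ccS k j : cc k.+1 j = q ^+ j * cc k j + (if j is j'.+1 then cc k j' else 0).
Proof. by []. Qed.
Lemma cc_sub k : cc k.+1 k = \sum_(j < k.+1) q ^+ j.
Proof.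
elim: k => [|k IH]; first by rewrite /= big_ord1 expr0 mulr1 addr0.
by rewrite ccS IH cc_diag mulr1 [RHS]big_ord_recr /= addrC.
Qed.

Lemma leibniz k x y :
  D k (x * y) = \sum_(j < k.+1) cc k j * (S j (D (k - j) x) * D j y).
Proof.
elim: k => [|k IH]; first by rewrite big_ord1 /= mul1r.
rewrite iterS IH dsum.
under eq_bigr => j _.
  rewrite (d_good _ _ (good_cc k j)) dM dS -iterS -subSn; last by rewrite -ltnS.
  over.
rewrite /=.
under eq_bigr => j _ do rewrite mulrDr.
rewrite big_split /=.
under [RHS]eq_bigr => j _ do rewrite mulrDl.
rewrite big_split /= [X in _ = X + _]big_ord_recr [X in _ = _ + X]big_ord_recl /=.
rewrite cc_big // mulr0 mul0r addr0 mul0r add0r.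
congr (_ + _).
apply: eq_bigr => j _.
by rewrite !mulrA; congr (_ * _ * _); case: (good_cc k j) => _ _ ->.
Qed.

Definition allN (l : seq R) := forall x, x \in l -> N x.
Fixpoint T (l : seq R) := if l is a :: w then S (size w) (d a) * T w else 1.
Lemma Nsum m (F : 'I_m -> R) : (forall i, N (F i)) -> N (\sum_(i < m) F i).
Proof. move=> H; apply: (big_ind N) => //; [exact: N0 | exact: NDr]. Qed.
Lemma allN_tail a w : allN (a :: w) -> allN w.
Proof. by move=> H x Hx; apply: H; rewrite inE Hx orbT. Qed.
Lemma allN_head a w : allN (a :: w) -> N a.
Proof. by move=> H; apply: H; rewrite mem_head. Qed.

Arguments allN_tail {a w}. Arguments allN_head {a w}.
Lemma Glem l : allN l -> forall k, (k < size l)%N -> N (D k (\prod_(x <- l) x)).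
Proof.
elim: l => [|a w IH] Hl k //= Hk.
rewrite big_cons leibniz; apply: Nsum => j; apply: NMl.
case: (ltnP j (size w)) => Hj.
  by apply: NMl; apply: IH => //; apply: allN_tail Hl.
have ejk : nat_of_ord j = k by have := ltn_ord j; lia.
rewrite ejk subnn /=; apply: NMr; apply: NS; exact: allN_head Hl.
Qed.

Lemma qfactS m : qfact q m.+1 = qfact q m * \sum_(j < m.+1) q ^+ j.
Proof. by rewrite /qfact big_ord_recr. Qed.
Lemma good_qfact m : good (qfact q m).
Proof. by apply: good_prod => i; apply: good_sum => j; apply: goodX. Qed.

Arguments cc : simpl never.
Lemma alg A C Q e X Dm Tw : N A -> N C -> N (Dm - Q * Tw) -> central Q ->
  N (A + e * (X * Dm) + C - Q * e * (X * Tw)).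
Proof.
move=> hA hC hD hQ.
have -> : Q * e * (X * Tw) = e * (X * (Q * Tw)).
  by rewrite hQ -!mulrA; congr (_ * _); rewrite !mulrA hQ.
have -> : A + e * (X * Dm) + C - e * (X * (Q * Tw)) = (A + C) + e * (X * (Dm - Q * Tw)).
  by rewrite !mulrBr -!addrA; congr (_ + _); rewrite addrCA.
apply: NDr; first exact: NDr.
by apply: NMl; apply: NMl.
Qed.
Lemma Hlem l : allN l -> N (D (size l) (\prod_(x <- l) x) - qfact q (size l) * T l).
Proof.
elim: l => [|a w IH] Hl.
  by rewrite big_nil /qfact big_ord0 /= mulr1 subrr; apply: N0.
have IH' := IH (allN_tail Hl).
have -> : size (a :: w) = (size w).+1 by [].
have -> : T (a :: w) = S (size w) (d a) * T w by [].
rewrite big_cons leibniz big_ord_recr big_ord_recr /= subSnn subnn qfactS cc_sub.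
apply: alg => //.
- apply: Nsum => j; apply: NMl; apply: NMl; apply: Glem; first exact: allN_tail Hl.
  by have := ltn_ord j.
- by apply: NMl; apply: NMr; apply: Ns; apply: NS; apply: allN_head Hl.
- by case: (good_qfact (size w)).
Qed.

Hypothesis Hnoeth : left_noetherian R.
Variable n : nat.
Hypothesis Hvan : forall x, setpow N n x -> iter n d x = 0.
Hypothesis Hfact : qfact q n \is a GRing.unit.

Lemma Tmem l : allN l -> size l = n -> N (T l).
Proof.
move=> Hl Hs; have h := Hlem _ Hl; rewrite Hs in h.
have z : D n (\prod_(x <- l) x) = 0.
  apply: Hvan; exists 1%N, (fun _ i => nth 0 l i); split.
    by move=> _ i; apply: Hl; apply: mem_nth; rewrite Hs; apply: ltn_ord.
  by rewrite big_ord1 (big_nth 0) Hs big_mkord.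
rewrite z sub0r in h; have h2 := NN _ h; rewrite opprK in h2.
by rewrite -(mulKr Hfact (T l)); apply: NMl.
Qed.

Lemma sN_surj b : N b -> exists a, N a /\ s a = b.
Proof.
move=> Nb; have [g sg gs] := sbij.
have Sg : forall k b, S k (iter k g b) = b.
  elim=> [|k IH] b' //. by rewrite [S k.+1 _]iterSr [iter k.+1 g _]iterS gs IH.
pose I k x := N (S k x).
have [|k x|m Hm] := Hnoeth I.
- move=> k; split; rewrite /I.
  + by rewrite S0; apply: N0.
  + by move=> x y hx hy; rewrite SD; apply: NDr.
  + by move=> r x hx; rewrite SM; apply: NMl.
- by rewrite /I iterS; apply: Ns.
exists (g b); split; last exact: gs.
have hb : I m.+1 (iter m.+1 g b) by rewrite /I Sg.
have := (Hm m.+1 (leqnSn m) (iter m.+1 g b)).1 hb.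
by rewrite /I iterSr Sg.
Qed.

Lemma SN_surj j b : N b -> exists a, N a /\ S j a = b.
Proof.
elim: j b => [|j IH] b Nb; first by exists b.
have [a' [Na' <-]] := sN_surj _ Nb.
have [a [Na <-]] := IH a' Na'.
by exists a; split.
Qed.

Lemma lift bs : allN bs -> exists as_, [/\ allN as_, size as_ = size bs &
  exists c, central c /\ \prod_(x <- bs) d x = c * T as_].
Proof.
elim: bs => [|b bs IH] Hb.
  exists [::]; split => //; exists 1; split; first by move=> x; rewrite mul1r mulr1.
  by rewrite big_nil mul1r.
have [as_ [Ha Hs [c [hc he]]]] := IH (allN_tail Hb).
have [a [Na Sa]] := SN_surj (size bs) _ (allN_head Hb).
exists (a :: as_); split.
- by move=> x; rewrite inE => /orP [/eqP -> | /Ha].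
- by rewrite /= Hs.
exists (q ^+ size bs * c); split.
  case: (goodX (size bs)) => _ _ hX.
  by move=> x; rewrite -mulrA hc mulrA hX mulrA.
have -> : T (a :: as_) = S (size as_) (d a) * T as_ by [].
rewrite big_cons he -Sa dS Hs -!mulrA; congr (_ * _).
by rewrite !mulrA hc.
Qed.

Lemma part1_list bs : allN bs -> size bs = n -> N (\prod_(x <- bs) d x).
Proof.
move=> Hb Hs; have [as_ [Ha Hs' [c [hc ->]]]] := lift _ Hb.
by apply: NMl; apply: Tmem => //; rewrite Hs'.
Qed.

Lemma part1 : subsetR (setpow (imageR d N) n) N.
Proof.
move=> x [m [f [Hf ->]]]; apply: Nsum => j.
have [h Hh] : exists h : 'I_n -> R, forall i, N (h i) /\ f j i = d (h i).
  apply: (@fin_all_exists _ (fun _ => R) (fun i u => N u /\ f j i = d u)) => i.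
  have [a [Na ea]] := Hf j i; by exists a.
have -> : \prod_(i < n) f j i = \prod_(x <- map h (index_enum 'I_n)) d x.
  by rewrite big_map; apply: eq_bigr => i _; case: (Hh i).
apply: part1_list.
  by move=> y /mapP [i _ ->]; case: (Hh i).
by rewrite size_map -[index_enum _]filter_predT deprecated_filter_index_enum -cardT card_ord.
Qed.

Definition Iset (x : R) := exists a c : R, [/\ N a, N c & x = d a + c].
Lemma helper2 (X Y Z : R) : Y + X + (Z - X) = Y + Z.
Proof. by rewrite addrACA subrr addr0. Qed.

Lemma Iideal : is_ideal Iset.
Proof.
have [g sg gs] := sbij.
split; split.
- by exists 0, 0; split; [exact: N0 | exact: N0 | rewrite d0 addr0].
- move=> x y [a [c [Na Nc ->]]] [a' [c' [Na' Nc' ->]]].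
  exists (a + a'), (c + c'); split; [exact: NDr | exact: NDr | by rewrite dD addrACA].
- move=> r x [a [c [Na Nc ->]]].
  exists (g r * a), (r * c - d (g r) * a); split.
  + exact: NMl.
  + by apply: NB; apply: NMl.
  + by rewrite dM gs mulrDr (addrC (d (g r) * a)) helper2.
- by exists 0, 0; split; [exact: N0 | exact: N0 | rewrite d0 addr0].
- move=> x y [a [c [Na Nc ->]]] [a' [c' [Na' Nc' ->]]].
  exists (a + a'), (c + c'); split; [exact: NDr | exact: NDr | by rewrite dD addrACA].
- move=> r x [a [c [Na Nc ->]]].
  exists (a * r), (c * r - s a * d r); split.
  + exact: NMr.
  + by apply: NB; [apply: NMr | apply: NMr; apply: Ns].
  + by rewrite dM mulrDl helper2.
Qed.

Lemma Iprod l : (forall x, x \in l -> Iset x) -> exists bs, [/\ allN bs, size bs = size l &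
  N (\prod_(x <- l) x - \prod_(b <- bs) d b)].
Proof.
elim: l => [|x l IH] Hl.
  by exists [::]; split => //; rewrite !big_nil subrr; apply: N0.
have [bs [Hb Hs HN']] : exists bs, [/\ allN bs, size bs = size l &
  N (\prod_(x <- l) x - \prod_(b <- bs) d b)].
  by apply: IH => y Hy; apply: Hl; rewrite inE Hy orbT.
have [a [c [Na Nc ex]]] := Hl x (mem_head _ _).
exists (a :: bs); split.
- by move=> y; rewrite inE => /orP [/eqP -> | /Hb].
- by rewrite /= Hs.
rewrite !big_cons ex mulrDl addrAC -mulrBr.
by apply: NDr; [apply: NMl | apply: NMr].
Qed.

Lemma prime_pow (P I : R -> Prop) : is_prime_ideal P -> is_ideal I -> forall k,
  (forall l, (forall x, x \in l -> I x) -> size l = k.+1 -> P (\prod_(x <- l) x)) ->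
  forall x, I x -> P x.
Proof.
move=> HP HI; elim=> [|k IH] H x Ix.
  have := H [:: x]; rewrite big_cons big_nil mulr1; apply => //.
  by move=> y; rewrite inE => /eqP ->.
case: HP => [[[P0 PD PMl] [_ _ PMr]] _ Hpr].
case: HI => [[I0 ID IMl] [_ _ IMr]].
pose B y := forall J, is_ideal J ->
  (forall l, (forall x, x \in l -> I x) -> size l = k.+1 -> J (\prod_(x <- l) x)) -> J y.
have HB : is_ideal B.
  split; split.
  - by move=> J [[J0 _ _] _] _.
  - by move=> u v Bu Bv J HJ Hc; case: (HJ) => [[_ JD _] _]; apply: JD; [apply: Bu | apply: Bv].
  - by move=> r u Bu J HJ Hc; case: (HJ) => [[_ _ JM] _]; apply: JM; apply: Bu.
  - by move=> J [[J0 _ _] _] _.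
  - by move=> u v Bu Bv J HJ Hc; case: (HJ) => [[_ JD _] _]; apply: JD; [apply: Bu | apply: Bv].
  - by move=> r u Bu J HJ Hc; case: (HJ) => [_ [_ _ JM]]; apply: JM; apply: Bu.
have Hprod : forall a b, I a -> B b -> P (a * b).
  move=> a b Ia Bb.
  pose J y := forall a', I a' -> P (a' * y).
  have : J b.
    apply: Bb.
      split; split.
      - by move=> a' _; rewrite mulr0.
      - by move=> u v Ju Jv a' Ia'; rewrite mulrDr; apply: PD; [apply: Ju | apply: Jv].
      - by move=> r u Ju a' Ia'; rewrite mulrA; apply: Ju; apply: IMr.
      - by move=> a' _; rewrite mulr0.
      - by move=> u v Ju Jv a' Ia'; rewrite mulrDr; apply: PD; [apply: Ju | apply: Jv].
      - by move=> r u Ju a' Ia'; rewrite mulrA; apply: PMr; apply: Ju.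
    move=> l Hl Hs a' Ia'; have := H (a' :: l); rewrite big_cons; apply.
      by move=> y; rewrite inE => /orP [/eqP -> | /Hl].
    by rewrite /= Hs.
  by apply.
have [IsubP | BsubP] := Hpr I B (conj (And3 I0 ID IMl) (And3 I0 ID IMr)) HB Hprod.
  exact: IsubP.
apply: IH => // l Hl Hs; apply: BsubP => J _ HJ; exact: HJ.
Qed.
End Main.

Theorem proposition3p1p2 (R : unitRingType) (q : R) (s d : R -> R)
  (N : R -> Prop) (n : nat) :
  noetherian R ->
  q \is a GRing.unit -> central q ->
  is_q_skew_derivation q s d ->
  is_sigma_ideal s N ->
  (0 < n)%N ->
  (forall x, setpow N n x -> iter n d x = 0) ->
  qfact q n \is a GRing.unit ->
  subsetR (setpow (imageR d N) n) N /\
  ((forall x, N x <-> prime_radical x) -> subsetR (imageR d N) N).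
Proof.
move=> [Hnoeth _] _ Hq Hqsd HN Hn Hvan Hfact.
split; first exact: (part1 _ _ _ _ _ Hqsd HN Hq Hnoeth n Hvan Hfact).
move=> Hrad y [a [Na ->]].
apply/Hrad => P HP.
have NP : forall x, N x -> P x by move=> x Hx; exact: ((Hrad x).1 Hx P HP).
case: n Hn Hvan Hfact => [|n'] // _ Hvan Hfact.
apply: (prime_pow _ _ _ HP (Iideal _ _ _ _ _ Hqsd HN) n').
  move=> l Hl Hs.
  have [bs [Hb Hs' HN']] := Iprod _ _ _ _ HN _ Hl.
  have Hp := part1_list _ _ _ _ _ Hqsd HN Hq Hnoeth _ Hvan Hfact _ Hb (etrans Hs' Hs).
  rewrite -(subrK (\prod_(b <- bs) d b) (\prod_(x <- l) x)); apply: NP.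
  exact: (NDr _ _ _ HN).
exists a, 0; split => //; [exact: (N0 _ _ _ HN) | by rewrite addr0].
Qed.
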